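(* Let $\varepsilon\in\{1,-1\}$ and let $w$ be a positive integer. If $T'_n(\varepsilon)\equiv 1 \pmod{p^w}$, then for every integer $m\ge 2$, $$\frac{T^{(m)}_n(\varepsilon)\, p^m}{m!}\equiv 0 \pmod{p^{w+2}}$$ (here $T^{(m)}_n(\varepsilon)/m!$ is an integer).
   Context: $p$ is a prime with $p>3$ and $n>1$ is an integer with $\gcd(n,p)=\gcd(n,p^2-1)=1$. $T_n(x)\in\mathbb{Z}[x]$ is the Chebyshev polynomial of the first kind: $T_0=1$, $T_1=x$, $T_d=2xT_{d-1}-T_{d-2}$. $T^{(m)}_n$ is its $m$-th derivative and $T'_n=T^{(1)}_n$. *)

(* Defs.v *)
From HB Require Import structures.
From mathcomp Require Import all_boot all_order all_algebra.
Set Implicit Arguments. Unset Strict Implicit. Unset Printing Implicit Defensive.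
Import GRing.Theory.
Local Open Scope ring_scope.

Fixpoint chebT (d : nat) : {poly int} :=
  match d with
  | 0 => 1
  | 1 => 'X
  | (d' .+1 as d1).+1 => 'X *+ 2 * chebT d1 - chebT d'
  end.

(* Main.v *)
Require Import Defs.
From HB Require Import structures.
From mathcomp Require Import all_boot all_order all_algebra.
From mathcomp Require Import ring zify.
Import GRing.Theory.
Local Open Scope ring_scope.


Lemma chebSS d : chebT d.+2 = 'X *+ 2 * chebT d.+1 - chebT d.
Proof. by []. Qed.

Definition Fprop d := (1 - 'X^2) * (chebT d.+1)^`() = (d.+1)%:R * (chebT d - 'X * chebT d.+1).

Lemma chebF_aux d : Fprop d /\ Fprop d.+1.
Proof.
elim: d => [|d [IH0 IH1]].
  rewrite /Fprop /= !derivE /=; split; ring.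
split => //; rewrite /Fprop in IH0 IH1 *.
rewrite [chebT d.+3]chebSS ?derivB ?derivM ?derivMn ?derivX.
rewrite (_ : (1 - 'X^2) * _ = (1 - 'X^2) * (chebT d.+2) *+ 2 + 'X *+ 2 * ((1 - 'X^2) * (chebT d.+2)^`()) - (1 - 'X^2) * (chebT d.+1)^`()); last by ring.
rewrite IH0 IH1 [chebT d.+2]chebSS; ring.
Qed.

Lemma chebF d : Fprop d. Proof. by case: (chebF_aux d). Qed.

Definition Oprop d := (1 - 'X^2) * (chebT d)^`()^`() - 'X * (chebT d)^`() + chebT d *+ (d ^ 2) = 0.

Lemma chebO_aux d : Oprop d /\ Oprop d.+1.
Proof.
elim: d => [|d [IH0 IH1]].
  rewrite /Oprop /= !derivE /=; split; ring.
split => //; rewrite /Oprop in IH0 IH1 *.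
rewrite [chebT d.+2]chebSS ?derivB ?derivM ?derivMn ?derivX ?derivB ?derivD ?derivM ?derivMn ?derivX.
have d1 : (1 : {poly int})^`() = 0 by rewrite -polyC1 derivC.
rewrite d1 mul0rn mul0r add0r.
have F := chebF d; rewrite /Fprop in F.
set b := chebT d.+1; set c := chebT d.
transitivity ('X *+ 2 * ((1 - 'X^2) * (chebT d.+1)^`()^`() - 'X * (chebT d.+1)^`() + chebT d.+1 *+ (d.+1 ^ 2))
   - ((1 - 'X^2) * (chebT d)^`()^`() - 'X * (chebT d)^`() + chebT d *+ (d ^ 2))
   + 4%:R * ((1 - 'X^2) * (chebT d.+1)^`() - (d.+1)%:R * (chebT d - 'X * chebT d.+1))); first by rewrite /b /c; ring.
by rewrite IH0 IH1 F subrr; ring.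
Qed.

Lemma chebO d : Oprop d. Proof. by case: (chebO_aux d). Qed.

Lemma cheb_eps (e : int) d : e ^+ 2 = 1 -> (chebT d).[e] = e ^+ d.
Proof.
move=> e2.
suff: (chebT d).[e] = e ^+ d /\ (chebT d.+1).[e] = e ^+ d.+1 by case.
elim: d => [|d [IH0 IH1]]; first by rewrite /= !hornerE.
split => //; rewrite chebSS !hornerE IH0 IH1.
rewrite -[d.+2]addn2 exprD e2 exprS.
transitivity ((e ^+ 2 + e ^+ 2 - 1) * e ^+ d); first by ring.
by rewrite e2; ring.
Qed.

Lemma nderivn_deriv (q : {poly int}) k : (q^`())^`N(k) = q^`N(k.+1) *+ k.+1.
Proof.
apply/polyP => i; rewrite coef_nderivn coef_deriv coefMn coef_nderivn -!mulrnA.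
rewrite addSn; congr (_ *+ _); have := mul_bin_diag (k + i).+1 k; rewrite /= => ->; apply: mulnC. Qed.

Lemma nderivn_MXsub (s : {poly int}) c k :
  (s * ('X - c%:P))^`N(k.+1) = s^`N(k) + s^`N(k.+1) * ('X - c%:P).
Proof.
have := nderivnMXaddC k s 0; rewrite polyC0 !addr0 => H.
rewrite mulrBr nderivnB H [s * _]mulrC mul_polyC nderivnZ -mul_polyC.
by rewrite mulrBr addrA [_ * c%:P]mulrC. Qed.

Lemma nderivn_Xpow (r : {poly int}) c j k :
  ((('X - c%:P)^+j * r)^`N(k)).[c] = if (j <= k)%N then (r^`N(k-j)).[c] else 0.
Proof.
elim: j k => [|j IH] k; first by rewrite expr0 mul1r subn0.
rewrite exprSr -mulrA [(_ - _) * r]mulrC mulrA.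
case: k => [|k].
  by rewrite nderivn0 hornerM hornerXsubC subrr mulr0.
rewrite nderivn_MXsub hornerD hornerM hornerXsubC subrr mulr0 addr0.
by rewrite IH ltnS subSS.
Qed.

Lemma subr_helper (a b h : int) : h = 0 -> a - b = h -> a = b.
Proof. by move=> -> /eqP; rewrite subr_eq0 => /eqP. Qed.

Lemma cheb_rec n (e : int) m : e ^+ 2 = 1 ->
  ((chebT n)^`N(m)).[e] *+ (n ^ 2) - ((chebT n)^`N(m)).[e] *+ (m ^ 2)
  = e * ((chebT n)^`N(m.+1)).[e] *+ (m.+1 * (2 * m).+1).
Proof.
move=> e2.
have O := chebO n; rewrite /Oprop in O.
set q := chebT n in O *.
have e2P : (e%:P)^+2 = 1 :> {poly int} by rewrite -rmorphXn e2.
have E : -(('X - e%:P)^+2 * q^`()^`()) - ('X - e%:P)^+1 * (e *: (q^`()^`() *+ 2))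
   - ('X - e%:P)^+1 * q^`() - e *: q^`() + q *+ (n^2) = 0.
  rewrite -O -!mul_polyC.
  transitivity ((1 - 'X^2) * q^`()^`() - 'X * q^`() + q *+ n ^ 2 + (e%:P^+2 - 1) * q^`()^`()); first by ring.
  by rewrite e2P subrr mul0r addr0.
have := congr1 (fun r => (r^`N(m)).[e]) E.
rewrite /= !nderivnD ?nderivnB !nderivnN nderivnMn nderivnZ.
rewrite !(hornerMn, hornerZ, hornerN, hornerD) !nderivn_Xpow.
have z : (0 : {poly int})^`N(m) = 0 by apply: raddf0.
rewrite z horner0.
case: m {z} => [|[|m]]; rewrite ?ltn0 ?ltnn ?ltn0Sn ?ltnS ?ltn0Sn ?subSS ?subn0 ?leq0n;
 rewrite ?nderivnZ ?nderivnMn ?nderivn_deriv ?nderivnMn ?nderivn_deriv ?nderivnMn;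
 rewrite ?(hornerMn, hornerZ, hornerN, hornerD, horner0) => H.
all: move: H; set L := (X in X = 0) => H; apply: (@subr_helper _ _ L H); rewrite /L; ring.
Qed.

Definition Qn (j : nat) : nat := \prod_(k < j) (k.+2 * (2 * k.+1).+1)%N.

Lemma Qn_fact j : (Qn j * 2 ^ j.+1 = (2 * j.+1)`!)%N.
Proof.
elim: j => [|j IH]; first by rewrite /Qn big_ord0.
rewrite /Qn big_ord_recr /= -/(Qn j).
rewrite (_ : (2 * j.+2) = (2 * j.+1).+2)%N; last by lia.
rewrite factS factS -IH expnS; lia.
Qed.

Lemma cheb_prod n (e : int) j : e ^+ 2 = 1 ->
  e ^+ j * (Qn j)%:R * ((chebT n)^`N(j.+1)).[e]
  = (\prod_(k < j) ((n ^ 2)%:R - ((k.+1) ^ 2)%:R)) * ((chebT n)^`N(1)).[e].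
Proof.
move=> e2; elim: j => [|j IH]; first by rewrite /Qn !big_ord0 expr0 !mul1r.
rewrite /Qn big_ord_recr /= -/(Qn j) big_ord_recr /= natrM.
set D1 := ((chebT n)^`N(j.+1)).[e]; set D2 := ((chebT n)^`N(j.+2)).[e].
have R := cheb_rec n e (j.+1) e2; rewrite -/D1 -/D2 in R.
transitivity (e ^+ j * (Qn j)%:R * (e * D2 *+ (j.+2 * (2 * j.+1).+1))).
  rewrite exprSr; ring.
rewrite -R.
transitivity (e ^+ j * (Qn j)%:R * D1 * ((n ^ 2)%:R - ((j.+1) ^ 2)%:R)); first by ring.
rewrite IH; ring.
Qed.

Lemma sum_bound p N K : (0 < p)%N ->
  ((p - 1) * \sum_(1 <= k < K.+1) N %/ p ^ k + N %/ p ^ K <= N)%N.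
Proof.
move=> p0; elim: K => [|K IH]; first by rewrite big_geq // expn0 divn1 muln0.
rewrite big_nat_recr //= expnSr divnMA.
have := leq_trunc_div (N %/ p ^ K) p.
move: IH; set S := (\sum_(_ <= _ < _) _)%N; set x := (N %/ p ^ K)%N; set y := (x %/ p)%N.
nia.
Qed.

Lemma logn_fact_bound p N : prime p -> ((p - 1) * logn p N`! <= N)%N.
Proof.
move=> pp; rewrite logn_fact //.
apply: leq_trans (sum_bound p N N (prime_gt0 pp)); apply: leq_addr.
Qed.

Theorem lemma2 (p n : nat) (eps : int) (w m : nat) :
  prime p -> (3 < p)%N -> (1 < n)%N ->
  coprime n p -> coprime n (p ^ 2 - 1) ->
  (eps = 1 \/ eps = -1) -> (0 < w)%N ->
  ((chebT n)^`().[eps] = 1 %[mod (p ^ w)%:Z])%Z ->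
  (2 <= m)%N ->
  (((chebT n)^`N(m)).[eps] * (p ^ m)%:Z = 0 %[mod (p ^ (w + 2))%:Z])%Z.
Proof.
move=> pp p3 n1 cnp cnp2 heps w0 hyp m2.
have e2 : eps ^+ 2 = 1 by case: heps => ->; rewrite ?sqrrN expr1n.
have aeps : `|eps ^+ 2| = 1%N by rewrite e2.
have nodd : odd n.
  have podd : odd p.
    by case: (even_prime pp) => // p2; rewrite p2 in p3.
  rewrite -coprimen2; apply: coprime_dvdr cnp2.
  rewrite dvdn2 oddB; last by rewrite expn_gt0 prime_gt0.
  by rewrite oddX podd orbT.
have en : eps ^+ n.+1 = 1.
  case: heps => ->; first by rewrite expr1n.
  by rewrite -signr_odd /= nodd.
have D1E : ((chebT n)^`N(1)).[eps] = (n ^ 2)%:R.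
  have R0 := cheb_rec n eps 0 e2.
  rewrite nderivn0 cheb_eps // in R0.
  move: R0; rewrite (_ : (0 ^ 2)%N = 0%N) // (_ : (1 * (2 * 0).+1)%N = 1%N) // mulr0n subr0 mulr1n => R0.
  transitivity (eps * (eps * ((chebT n)^`N(1)).[eps])); first by rewrite mulrA -expr2 e2 mul1r.
  by rewrite -R0 mulrnAr -exprS en.
rewrite -nderivn1 D1E in hyp.
have hw : ((p ^ w)%:Z %| (n ^ 2)%:R - 1)%Z by rewrite -eqz_mod_dvd; apply/eqP.
case: m m2 => [|[|j]] // _.
have P := cheb_prod n eps j.+1 e2.
rewrite D1E big_ord_recl (_ : (0.+1 ^ 2)%N = 1%N) // in P.
have hQ : ((p ^ w)%:Z %| eps ^+ j.+1 * (Qn j.+1)%:R * ((chebT n)^`N(j.+2)).[eps])%Z.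
  rewrite P -mulrA; exact: dvdz_trans hw (dvdz_mulr _ _).
have ae : absz eps = 1%N by case: heps => ->.
move: hQ; rewrite dvdzE !abszM abszX ae exp1n mul1n natz /= => hQ.
have Qpos : (0 < Qn j.+1)%N by rewrite /Qn prodn_gt0 // => i; rewrite muln_gt0.
apply/eqP; rewrite eqz_mod_dvd subr0 dvdzE abszM /=.
set d := `|((chebT n)^`N(j.+2)).[eps]|%N in hQ *.
have [d0|dpos] := posnP d; first by rewrite d0 mul0n dvdn0.
rewrite (pfactor_dvdn (w + 2) pp); last by rewrite muln_gt0 dpos expn_gt0 prime_gt0.
rewrite (@lognM p d (p ^ j.+2) dpos); last by rewrite expn_gt0 prime_gt0.
rewrite (pfactorK _ pp).
move: hQ; rewrite (pfactor_dvdn w pp); last by rewrite muln_gt0 dpos Qpos.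
rewrite (@lognM p _ d Qpos dpos) => hQ.
have vb : (logn p (Qn j.+1) <= j)%N.
  have p5 : (4 < p)%N.
    by move: p3; rewrite leq_eqVlt => /orP [/eqP e|//]; rewrite -e in pp.
  clear -pp p5; case: j => [|j].
    rewrite logn_coprime // prime_coprime // /Qn big_ord1 /=.
    apply/negP; rewrite Euclid_dvdM // => /orP [] /dvdn_leq; lia.
  have h1 : (logn p (Qn j.+2) <= logn p (2 * j.+3)`!)%N.
    apply: dvdn_leq_log; first exact: fact_gt0.
    by rewrite -Qn_fact dvdn_mulr.
  have h2 := @logn_fact_bound p (2 * j.+3) pp. 
  have h3 : (4 * logn p (Qn j.+2) <= (p - 1) * logn p (Qn j.+2))%N by apply: leq_mul => //; lia.
  have h4 : ((p - 1) * logn p (Qn j.+2) <= (p - 1) * logn p (2 * j.+3)`!)%N by apply: leq_mul.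
  lia.
lia.
Qed.
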